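(* Let $(R,\mathfrak{m})$ satisfy condition $\bigstar$. Then $\bar{T}(R)+pR=\{t+x: t\in\bar{T}(R),\ x\in pR\}$ is a subring of $R$ with the same residue field as $R$. More generally, for any ideal $I$ of $R$ containing $\mathfrak{m}^2+pR$, the set $\bar{T}(R)+I$ is a subring of $R$ with the same residue field as $R$.
   Context: All rings are commutative and unital. Condition $\bigstar$ on a ring $(R,\mathfrak{m})$: $R$ is a local ring (unique maximal ideal $\mathfrak{m}$, not necessarily Noetherian) of characteristic $p^N$ for a prime $p$ and some $N\ge 1$, with finite residue field $R/\mathfrak{m}\cong\mathbb{F}_q$, and $\mathfrak{m}$ is a nilpotent ideal. $T(R)$ is the unique subgroup of $R^\times$ mapping isomorphically onto $\mathbb{F}_q^\times$ under reduction mod $\mathfrak{m}$, and $\bar{T}(R)=T(R)\cup\{0\}$. A subring $S$ is local with $\mathfrak{m}_S=\mathfrak{m}\cap S$ and its residue field is naturally a subfield of $R/\mathfrak{m}$. *)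

(* Defs.v *)
From HB Require Import structures.
From mathcomp Require Import all_boot all_order all_algebra.
Set Implicit Arguments. Unset Strict Implicit. Unset Printing Implicit Defensive.
Import GRing.Theory.
Local Open Scope ring_scope.

Section Defs.
Variable R : comUnitRingType.

Definition is_ideal (I : R -> Prop) : Prop :=
  [/\ I 0, (forall x y, I x -> I y -> I (x + y)) & (forall r x, I x -> I (r * x))].

Definition is_local_with (m : R -> Prop) : Prop :=
  [/\ is_ideal m, ~ m 1 & forall x, ~ m x -> x \is a GRing.unit].

Definition has_char_pN (p N : nat) : Prop :=
  [/\ prime p, (0 < N)%N & forall n : nat, (n%:R : R) = 0 <-> (p ^ N %| n)%N].

Definition finite_residue (m : R -> Prop) : Prop :=
  exists s : seq R, forall x, exists2 y, y \in s & m (x - y).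

(* m is nilpotent: m^n = 0 for some n, i.e. every product of n elements of m
   vanishes (m^n is generated by such products). *)
Definition nilpotent_ideal (m : R -> Prop) : Prop :=
  exists n : nat, forall s : seq R, size s = n -> (forall x, x \in s -> m x) ->
    \prod_(x <- s) x = 0.

Definition condition_star (m : R -> Prop) (p N : nat) : Prop :=
  [/\ is_local_with m, has_char_pN p N, finite_residue m & nilpotent_ideal m].

(* T is a subgroup of R^x mapping isomorphically (under reduction mod m)
   onto (R/m)^x:  the nonzero residue classes are exactly those not in m. *)
Definition is_teichmuller (m : R -> Prop) (T : R -> Prop) : Prop :=
  [/\ (forall t, T t -> t \is a GRing.unit), T 1,
      (forall s t, T s -> T t -> T (s * t)),
      (forall t, T t -> T t^-1)
    & forall x, ~ m x -> exists! t, T t /\ m (x - t)].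

Definition Tbar (T : R -> Prop) (x : R) : Prop := T x \/ x = 0.

Definition set_add (A I : R -> Prop) (x : R) : Prop :=
  exists a y, [/\ A a, I y & x = a + y].

Definition pR (p : nat) (x : R) : Prop := exists r, x = p%:R * r.

(* I contains m^2 + pR (for I an ideal, this is containment of the ideal
   m^2 + pR generated by the products ab, a,b in m, and the multiples of p). *)
Definition contains_msq_pR (m : R -> Prop) (p : nat) (I : R -> Prop) : Prop :=
  (forall a b, m a -> m b -> I (a * b)) /\ (forall x, pR p x -> I x).

Definition is_subring (S : R -> Prop) : Prop :=
  [/\ S 0, S 1, (forall x y, S x -> S y -> S (x - y))
    & (forall x y, S x -> S y -> S (x * y))].

(* The residue field S/(m cap S) of S, viewed inside R/m, is all of R/m. *)
Definition same_residue_field (m : R -> Prop) (S : R -> Prop) : Prop :=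
  forall x, exists y, S y /\ m (x - y).

End Defs.

(* Main.v *)
Require Import Defs.
From HB Require Import structures.
From mathcomp Require Import all_boot all_order all_algebra.
From mathcomp Require Import ring.
From Stdlib Require Import Classical ClassicalEpsilon.
Set Implicit Arguments. Unset Strict Implicit. Unset Printing Implicit Defensive.
Import GRing.Theory.
Local Open Scope ring_scope.

Lemma idE (R : comUnitRingType) (J : R -> Prop) x y : J x -> x = y -> J y.
Proof. by move=> H <-. Qed.

Lemma idN (R : comUnitRingType) (J : R -> Prop) x : is_ideal J -> J x -> J (- x).
Proof. case=> _ _ HM Hx. rewrite -mulN1r. exact: HM. Qed.

Lemma idD (R : comUnitRingType) (J : R -> Prop) x y : is_ideal J -> J x -> J y -> J (x + y).
Proof. case=> _ HD _; exact: HD. Qed.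

Lemma idB (R : comUnitRingType) (J : R -> Prop) x y : is_ideal J -> J x -> J y -> J (x - y).
Proof. move=> hJ hx hy; apply: idD => //; exact: idN. Qed.

Lemma idM (R : comUnitRingType) (J : R -> Prop) r x : is_ideal J -> J x -> J (r * x).
Proof. case=> _ _ HM; exact: HM. Qed.

Lemma id0 (R : comUnitRingType) (J : R -> Prop) : is_ideal J -> J 0.
Proof. by case. Qed.

Lemma pR_ideal (R : comUnitRingType) p : is_ideal (@pR R p).
Proof.
split; first by exists 0; rewrite mulr0.
- move=> x y [r ->] [s ->]; exists (r + s); by rewrite mulrDr.
- move=> r x [s ->]; exists (r * s); by rewrite mulrCA.
Qed.

Lemma binom_pR (R : comUnitRingType) (p : nat) (x y : R) : prime p ->
  pR p ((x + y) ^+ p - x ^+ p - y ^+ p).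
Proof.
move=> pp; rewrite exprDn.
case: p pp => [//|p] pp.
rewrite big_ord_recl big_ord_recr /=.
set S := (X in _ + (X + _)).
have [c ->] : pR p.+1 S.
  have H: forall i : 'I_p, pR p.+1 ((x ^+ (p.+1 - bump 0 i) * y ^+ bump 0 i) *+ 'C(p.+1, bump 0 i)).
    move=> i; rewrite /bump /=.
    have : (p.+1 %| 'C(p.+1, (1 + i)))%N.
      apply: prime_dvd_bin => //; apply/andP; split=> //; rewrite add1n ltnS; exact: ltn_ord.
    case/dvdnP=> k ->. exists ((x ^+ (p.+1 - (1 + i)) * y ^+ (1 + i)) *+ k).
    by rewrite mulrnA mulr_natl mulrnAC.
  rewrite /S; elim/big_ind: _ => //.
  - by exists 0; rewrite mulr0.
  - by move=> a b [r ->] [s ->]; exists (r + s); rewrite mulrDr.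
rewrite /bump /= !subn0 add1n subnn !expr0 mulr1 mul1r bin0 binn !mulr1n.
by exists c; ring.
Qed.

Lemma frobn_add (R : comUnitRingType) (J : R -> Prop) p n (x y : R) :
  prime p -> is_ideal J -> (forall z, pR p z -> J z) ->
  J ((x + y) ^+ (p ^ n) - x ^+ (p ^ n) - y ^+ (p ^ n)).
Proof.
move=> pp hJ hp; elim: n => [|n IH].
  by rewrite expn0 !expr1; apply: (idE (id0 hJ)); ring.
rewrite expnSr !exprM.
set A := (x + y) ^+ (p ^ n); set X := x ^+ (p ^ n); set Y := y ^+ (p ^ n).
move: IH; rewrite -/A -/X -/Y => IH.
set j := A - X - Y.
have eA : A = (X + Y) + j by rewrite /j; ring.
have h1 := hp _ (binom_pR (X + Y) j pp).
have h2 := hp _ (binom_pR X Y pp).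
have h3 : J (j ^+ p).
  have p0 := prime_gt0 pp; rewrite -(prednK p0) exprSr; exact: idM.
rewrite eA; apply: (idE (idD hJ (idD hJ h1 h3) h2)); ring.
Qed.

Lemma unit_notm (R : comUnitRingType) (m : R -> Prop) u :
  is_local_with m -> u \is a GRing.unit -> ~ m u.
Proof.
case=> hm m1 _ hu mu; apply: m1; rewrite -(mulVr hu); exact: idM.
Qed.

Lemma notm_pow (R : comUnitRingType) (m : R -> Prop) x k :
  is_local_with m -> ~ m x -> ~ m (x ^+ k).
Proof.
move=> hl hx; apply: unit_notm => //; rewrite unitrX //.
by case: hl => _ _; apply.
Qed.

Lemma m_pow (R : comUnitRingType) (m : R -> Prop) x k :
  is_local_with m -> m (x ^+ k) -> m x.
Proof. by move=> hl h; apply: NNPP => hx; exact: (notm_pow hl hx h). Qed.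

Lemma p_in_m (R : comUnitRingType) (m : R -> Prop) p N :
  is_local_with m -> has_char_pN R p N -> m p%:R.
Proof.
move=> hl [pp N0 hc]; apply: NNPP => hp.
have hu : (p%:R : R) ^+ N \is a GRing.unit.
  by rewrite unitrX //; case: hl => _ _; apply.
move: hu; rewrite -natrX; have -> : ((p ^ N)%:R : R) = 0 by apply/hc.
by rewrite unitr0.
Qed.

Lemma pR_m (R : comUnitRingType) (m : R -> Prop) p N x :
  is_local_with m -> has_char_pN R p N -> pR p x -> m x.
Proof.
move=> hl hc [r ->]; rewrite mulrC; apply: idM; first by case: hl.
exact: p_in_m hc.
Qed.

Lemma T_uniq (R : comUnitRingType) (m : R -> Prop) T a b :
  is_local_with m -> is_teichmuller m T -> T a -> T b -> m (a - b) -> a = b.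
Proof.
move=> hl [hu _ _ _ hx] Ta Tb mab.
have na : ~ m a by apply: unit_notm => //; exact: hu.
have [t [_ U]] := hx a na.
have -> : a = t by apply/esym/U; rewrite subrr; split=> //; case: hl => [[]].
by apply: U.
Qed.

Lemma T_exp (R : comUnitRingType) (m : R -> Prop) T t k :
  is_teichmuller m T -> T t -> T (t ^+ k).
Proof.
case=> _ T1 TM _ _ Tt; elim: k => [|k IH]; first by rewrite expr0.
by rewrite exprS; apply: TM.
Qed.

Lemma frob_inj (R : comUnitRingType) (m : R -> Prop) p N T a b :
  condition_star m p N -> is_teichmuller m T -> T a -> T b -> a ^+ p = b ^+ p -> a = b.
Proof.
move=> [hl hc _ _] hT Ta Tb e.
apply: (T_uniq hl hT Ta Tb).
have pp : prime p by case: hc.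
have h := binom_pR (a - b) b pp.
apply: (@m_pow _ _ _ p hl).
have : m (- ((a - b + b) ^+ p - (a - b) ^+ p - b ^+ p)).
  apply: idN; first by case: hl.
  exact: pR_m hc h.
by rewrite subrK e; congr m; ring.
Qed.

Lemma frobn_inj (R : comUnitRingType) (m : R -> Prop) p N T a b k :
  condition_star m p N -> is_teichmuller m T -> T a -> T b ->
  a ^+ (p ^ k) = b ^+ (p ^ k) -> a = b.
Proof.
move=> hs hT; elim: k a b => [|k IH] a b Ta Tb; first by rewrite expn0 !expr1.
rewrite expnSr !exprM => e.
apply: IH => //; apply: (frob_inj hs hT) => //; [exact: (@T_exp _ m T _ _ hT Ta) | exact: (@T_exp _ m T _ _ hT Tb)].
Qed.

Lemma pigeon (R : comUnitRingType) (m : R -> Prop) T (s0 : seq R) (L : seq R) :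
  is_local_with m -> is_teichmuller m T ->
  (forall x, exists2 y, y \in s0 & m (x - y)) ->
  uniq L -> (forall x, x \in L -> T x) -> (size L <= size s0)%N.
Proof.
move=> hl hT hs uL TL.
have hs' : forall x, exists y, y \in s0 /\ m (x - y).
  by move=> x; have [y ? ?] := hs x; exists y.
pose g x := proj1_sig (constructive_indefinite_description _ (hs' x)).
have gP : forall x, g x \in s0 /\ m (x - g x).
  by move=> x; rewrite /g; case: constructive_indefinite_description.
rewrite -(size_map g); apply: uniq_leq_size.
  rewrite map_inj_in_uniq // => x y xL yL e.
  apply: (T_uniq hl hT (TL _ xL) (TL _ yL)).
  have [_ h1] := gP x; have [_ h2] := gP y.
  have -> : x - y = (x - g x) - (y - g y) by rewrite e; ring.
  by apply: idB => //; case: hl.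
by move=> z /mapP [x _ ->]; case: (gP x).
Qed.

Lemma period (R : comUnitRingType) (m : R -> Prop) p N T (s0 : seq R) t :
  condition_star m p N -> is_teichmuller m T ->
  (forall x, exists2 y, y \in s0 & m (x - y)) -> T t ->
  exists d, (0 < d <= size s0)%N /\ t ^+ (p ^ d) = t.
Proof.
move=> hs hT hs0 Tt.
have hl : is_local_with m by case: hs.
pose f k := t ^+ (p ^ k).
have H : ~ (forall i j, (i < (size s0).+1)%N -> (j < (size s0).+1)%N -> f i = f j -> i = j).
  move=> Hinj.
  have u : uniq (map f (iota 0 (size s0).+1)).
    rewrite map_inj_in_uniq ?iota_uniq // => i j; rewrite !mem_iota !add0n.
    exact: Hinj.
  have TL : forall x, x \in map f (iota 0 (size s0).+1) -> T x.
    by move=> x /mapP [k _ ->]; exact: (@T_exp _ m T _ _ hT Tt).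
  by have := pigeon hl hT hs0 u TL; rewrite size_map size_iota ltnn.
have [i [j [ij [jK e]]]] : exists i j, (i < j)%N /\ (j <= size s0)%N /\ f i = f j.
  apply: NNPP => Hn; apply: H => i j Hi Hj e.
  case: (ltngtP i j) => // c; exfalso; apply: Hn.
  - by exists i, j.
  - by exists j, i.
exists (j - i)%N; split; first by rewrite subn_gt0 ij /= (leq_trans (leq_subr _ _) jK).
apply: (frobn_inj (k := i) hs hT) => //; first exact: (@T_exp _ m T _ _ hT Tt).
rewrite -exprM -expnD subnK ?(ltnW ij) //.
Qed.

Lemma common_exp (R : comUnitRingType) (m : R -> Prop) p N T n0 :
  condition_star m p N -> is_teichmuller m T ->
  exists n, (n0 <= p ^ n)%N /\ (0 < n)%N /\ forall t, T t -> t ^+ (p ^ n) = t.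
Proof.
move=> hs hT.
have [_ [pp _ _] [s0 hs0] _] := hs.
exists ((size s0)`! * n0.+1)%N; split; last split.
- apply: ltnW; apply: (leq_trans (ltn_expl _ (prime_gt1 pp))).
  by rewrite leq_exp2l ?prime_gt1 // (leq_trans (leqnSn _)) // leq_pmull ?fact_gt0.
- by rewrite muln_gt0 fact_gt0.
move=> t Tt.
have [d [/andP [d0 dK] ed]] := period hs hT hs0 Tt.
have /dvdnP [c ->] := dvdn_fact (m := d) (n := size s0) (introT andP (conj d0 dK)).
rewrite mulnAC mulnC; elim: (c * n0.+1)%N => [|k IH]; first by rewrite muln0 expn0 expr1.
by rewrite mulnS expnD exprM ed.
Qed.

Lemma prod_nseq (R : comUnitRingType) (e : R) k : \prod_(x <- nseq k e) x = e ^+ k.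
Proof. by elim: k => [|k IH]; rewrite ?big_nil ?expr0 // big_cons IH exprS. Qed.

Lemma key_sub (R : comUnitRingType) (m : R -> Prop) p N T (J : R -> Prop) a b :
  condition_star m p N -> is_teichmuller m T ->
  is_ideal J -> (forall z, pR p z -> J z) ->
  Tbar T a -> Tbar T b -> exists u, Tbar T u /\ J (a - b - u).
Proof.
move=> hs hT hJ hpJ Ta Tb.
have [hl [pp _ _] _ [n0 hn0]] := hs.
have [n [pn [n_gt0 hfix]]] := common_exp n0 hs hT.
have hm : is_ideal m by case: hl.
have [u [Tu mu]] : exists u, Tbar T u /\ m (a - b - u).
  case: (classic (m (a - b))) => h.
    by exists 0; split; [right | rewrite subr0].
  have [_ _ _ _ hx] := hT.
  have [u [[Tu mu] _]] := hx _ h; by exists u; split=> //; left.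
have pn0 : (0 < p ^ n)%N by rewrite expn_gt0 prime_gt0.
have fixb : forall z, Tbar T z -> z ^+ (p ^ n) = z.
  move=> z [Tz|->]; first exact: hfix.
  by rewrite expr0n eqn0Ngt pn0.
have fe : (a - b - u) ^+ (p ^ n) = 0.
  have e0 : (a - b - u) ^+ n0 = 0.
    rewrite -prod_nseq; apply: hn0; first by rewrite size_nseq.
    by move=> x /nseqP [-> _].
  by rewrite -(subnK pn) exprD e0 mulr0.
exists u; split=> //.
have h1 := frobn_add n u (a - b - u) pp hJ hpJ.
have h2 := frobn_add n a (- b) pp hJ hpJ.
have h3 := frobn_add n b (- b) pp hJ hpJ.
rewrite (fixb a Ta) in h2.
have e1 : u + (a - b - u) = a - b by ring.
rewrite e1 fe (fixb u Tu) in h1.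
rewrite subrr (fixb b Tb) expr0n eqn0Ngt pn0 /= in h3.
apply: (idE (idD hJ (idB hJ h1 h2) h3)); ring.
Qed.

Lemma subring_gen (R : comUnitRingType) (m : R -> Prop) p N T (J : R -> Prop) :
  condition_star m p N -> is_teichmuller m T ->
  is_ideal J -> (forall z, pR p z -> J z) ->
  is_subring (set_add (Tbar T) J) /\ same_residue_field m (set_add (Tbar T) J).
Proof.
move=> hs hT hJ hpJ.
have [_ T1 TM _ hx] := hT.
split; first split.
- by exists 0, 0; split; [right | exact: id0 | rewrite addr0].
- by exists 1, 0; split; [left | exact: id0 | rewrite addr0].
- move=> _ _ [a [x [Ta Jx ->]]] [b [y [Tb Jy ->]]].
  have [u [Tu Ju]] := key_sub hs hT hJ hpJ Ta Tb.
  exists u, ((a - b - u) + (x - y)); split=> //.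
    by apply: idD => //; apply: idB.
  ring.
- move=> _ _ [a [x [Ta Jx ->]]] [b [y [Tb Jy ->]]].
  exists (a * b), (a * y + b * x + x * y); split.
  + case: Ta => [Ta|->]; last by right; rewrite mul0r.
    case: Tb => [Tb|->]; last by right; rewrite mulr0.
    by left; apply: TM.
  + by apply: idD => //; [apply: idD => //; apply: idM | apply: idM].
  + ring.
move=> x; case: (classic (m x)) => h.
  exists 0; split; last by rewrite subr0.
  by exists 0, 0; split; [right | exact: id0 | rewrite addr0].
have [t [[Tt mt] _]] := hx _ h.
exists t; split=> //.
by exists t, 0; split; [left | exact: id0 | rewrite addr0].
Qed.

Theorem corollary26 (R : comUnitRingType) (m : R -> Prop) (p N : nat)
    (T : R -> Prop) :
  condition_star m p N -> is_teichmuller m T ->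
  (is_subring (set_add (Tbar T) (pR p)) /\
   same_residue_field m (set_add (Tbar T) (pR p))) /\
  (forall I : R -> Prop, is_ideal I -> contains_msq_pR m p I ->
     is_subring (set_add (Tbar T) I) /\
     same_residue_field m (set_add (Tbar T) I)).
Proof.
move=> hs hT; split.
  by apply: (subring_gen hs hT) => //; exact: pR_ideal.
move=> I hI [_ hp]; exact: (subring_gen hs hT).
Qed.
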